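(* Let $\sigma$ be irrational and $\rho\in\mathbb R$, and let $b[n]=\{\sigma n+\rho\}$ for $n\ge0$, where $\{\cdot\}$ denotes the fractional part. Then $(b[n])_{n\ge0}$ is a canonical sequence (so the permutation it represents is ergodic), and it is a fixed point of the morphism $[0,1]^*\to[0,1]^*$ defined on single numbers by $x\mapsto \{2x-\rho\},\{2x-\rho+\sigma\}$ and extended by concatenation.
   Context: A real sequence $(a[i])_{i\ge0}$ is canonical if its elements are pairwise distinct, lie in $[0,1]$, and for every $t\in[0,1]$, $\#\{0\le k<n: a[j+k]<t\}/n\to t$ as $n\to\infty$ uniformly in $j$. An infinite permutation is an equivalence class of real sequences with pairwise distinct elements under $(a[n])\sim(b[n])$ iff $a[i]<a[j]\Leftrightarrow b[i]<b[j]$ for all $i,j$; it is ergodic if it has a canonical representative. A fixed point of a morphism $\psi$ on sequences of numbers is an infinite sequence $s$ with $\psi(s)=s$, where $\psi$ acts on an infinite sequence by concatenating the images of its terms. *)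

(* Defs.v *)
From Stdlib Require Import Reals Lra Lia List.
Open Scope R_scope.

Definition frac (x : R) : R := frac_part x.

Definition irrational (x : R) : Prop :=
  ~ exists (p q : Z), q <> 0%Z /\ x = IZR p / IZR q.

Fixpoint count_below (a : nat -> R) (t : R) (j n : nat) : nat :=
  match n with
  | O => O
  | S n' => (count_below a t j n' +
             (if Rlt_dec (a (j + n')%nat) t then 1 else 0))%nat
  end.

Definition canonical (a : nat -> R) : Prop :=
  (forall i j : nat, i <> j -> a i <> a j) /\
  (forall i : nat, 0 <= a i <= 1) /\
  (forall t : R, 0 <= t <= 1 ->
     forall eps : R, eps > 0 ->
       exists N : nat, forall n j : nat, (n >= N)%nat -> (n > 0)%nat ->
         Rabs (INR (count_below a t j n) / INR n - t) < eps).

Fixpoint prefix_len {A : Type} (f : nat -> list A) (i : nat) : nat :=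
  match i with
  | O => O
  | S i' => (prefix_len f i' + length (f i'))%nat
  end.

(* t is the infinite concatenation f 0 ++ f 1 ++ f 2 ++ ...
   (this determines t entirely when all f i are non-empty). *)
Definition is_concat (f : nat -> list R) (t : nat -> R) : Prop :=
  forall i k : nat, (k < length (f i))%nat ->
    t (prefix_len f i + k)%nat = nth k (f i) 0.

Definition fixed_point_of_morphism (psi : R -> list R) (s : nat -> R) : Prop :=
  (forall x, psi x <> nil) /\ is_concat (fun i => psi (s i)) s.

(* Main.v *)
Require Import Defs.
From Stdlib Require Import Reals List.
From Stdlib Require Import Lra Lia Classical ZArith.
Open Scope R_scope.

Definition fl (y : R) : Z := Int_part y.

Lemma fl_spec y : IZR (fl y) <= y < IZR (fl y) + 1.
Proof. unfold fl; destruct (base_Int_part y); lra. Qed.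

Lemma fl_unique y z : IZR z <= y < IZR z + 1 -> fl y = z.
Proof.
  intros [H1 H2]. unfold fl, Int_part.
  assert (E : (z + 1)%Z = up y).
  { apply tech_up; rewrite plus_IZR; simpl; lra. }
  lia.
Qed.

Lemma fl_shift y z : fl (y + IZR z) = (fl y + z)%Z.
Proof. apply fl_unique. rewrite plus_IZR. destruct (fl_spec y). lra. Qed.

Lemma fl_diff y D : D - 1 < IZR (fl (y + D)) - IZR (fl y) < D + 1.
Proof. destruct (fl_spec y), (fl_spec (y + D)). lra. Qed.

Lemma fl_mono y y' : y <= y' -> IZR (fl y) <= IZR (fl y').
Proof.
  intros H. destruct (fl_spec y), (fl_spec y').
  assert (fl y < fl y' + 1)%Z. { apply lt_IZR. rewrite plus_IZR. simpl. lra. }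
  apply IZR_le. lia.
Qed.

Lemma frac_fl y : frac y = y - IZR (fl y).
Proof. reflexivity. Qed.

Fixpoint sm (f : nat -> R) (n : nat) : R :=
  match n with O => 0 | S n' => sm f n' + f n' end.

Lemma sm_ext f g n : (forall i, (i < n)%nat -> f i = g i) -> sm f n = sm g n.
Proof.
  induction n; simpl; intros H; auto.
  rewrite IHn by (intros; apply H; lia). rewrite H by lia. auto.
Qed.

Lemma sm_plus f g n : sm (fun i => f i + g i) n = sm f n + sm g n.
Proof. induction n; simpl; [lra|]. rewrite IHn. lra. Qed.

Lemma sm_minus f g n : sm (fun i => f i - g i) n = sm f n - sm g n.
Proof. induction n; simpl; [lra|]. rewrite IHn. lra. Qed.

Lemma sm_split f a b : sm f (a + b) = sm f a + sm (fun i => f (a + i)%nat) b.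
Proof.
  induction b; simpl.
  - rewrite Nat.add_0_r. lra.
  - rewrite Nat.add_succ_r. simpl. rewrite IHb. lra.
Qed.

Lemma sm_le f g n : (forall i, (i < n)%nat -> f i <= g i) -> sm f n <= sm g n.
Proof.
  induction n; simpl; intros H; [lra|].
  assert (sm f n <= sm g n) by (apply IHn; intros; apply H; lia).
  assert (f n <= g n) by (apply H; lia). lra.
Qed.

Lemma sm_const c n : sm (fun _ => c) n = INR n * c.
Proof. induction n; simpl; [lra|]. rewrite IHn. destruct n; simpl; lra. Qed.

Lemma sm_bounds f n lo hi : (forall i, (i < n)%nat -> lo <= f i <= hi) ->
  INR n * lo <= sm f n <= INR n * hi.
Proof.
  intros H. rewrite <- !sm_const. split; apply sm_le; intros i Hi; apply H in Hi; lra.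
Qed.

Lemma sm_decomp f m q :
  sm f (m * q) = sm (fun r => sm (fun k => f (r + m * k)%nat) q) m.
Proof.
  induction q.
  - rewrite Nat.mul_0_r. simpl. transitivity (sm (fun _ => 0) m).
    + rewrite sm_const. lra.
    + apply sm_ext. auto.
  - rewrite Nat.mul_succ_r, sm_split, IHq. simpl. rewrite sm_plus. f_equal.
    apply sm_ext. intros i _. f_equal. lia.
Qed.

Lemma sm_tele F a K :
  sm (fun k => F (k + a)%nat - F k) K = sm (fun i => F (i + K)%nat - F i) a.
Proof.
  rewrite !sm_minus.
  assert (E1 : sm (fun k => F (k + a)%nat) K = sm F (a + K) - sm F a).
  { rewrite sm_split. assert (sm (fun i => F (a + i)%nat) K = sm (fun k => F (k + a)%nat) K)
      by (apply sm_ext; intros; f_equal; lia). lra. }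
  assert (E2 : sm (fun k => F (k + K)%nat) a = sm F (K + a) - sm F K).
  { rewrite sm_split. assert (sm (fun i => F (K + i)%nat) a = sm (fun k => F (k + K)%nat) a)
      by (apply sm_ext; intros; f_equal; lia). lra. }
  rewrite E1, E2, Nat.add_comm. lra.
Qed.

Definition G (t y : R) : R := IZR (fl y) - IZR (fl (y - t)).

Lemma G_ind t y : 0 <= t <= 1 -> (if Rlt_dec (frac y) t then 1 else 0) = G t y.
Proof.
  intros Ht. unfold G. rewrite frac_fl. destruct (fl_spec y) as [H1 H2].
  destruct (Rlt_dec (y - IZR (fl y)) t) as [Hl|Hl].
  - rewrite (fl_unique (y - t) (fl y - 1)). rewrite minus_IZR. lra.
    rewrite minus_IZR. lra.
  - rewrite (fl_unique (y - t) (fl y)). lra. lra.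
Qed.

Lemma G_bounds t y : 0 <= t <= 1 -> 0 <= G t y <= 1.
Proof. intros Ht. rewrite <- G_ind by auto. destruct Rlt_dec; lra. Qed.

Lemma G_shift t y z : G t (y + IZR z) = G t y.
Proof.
  unfold G. rewrite fl_shift. replace (y + IZR z - t) with ((y - t) + IZR z) by ring.
  rewrite fl_shift, !plus_IZR. ring.
Qed.

Definition Fz (d z : R) (i : nat) : R := IZR (fl (z + INR i * d)).

Lemma tele_bound d z a K :
  INR a * (INR K * d - 1) <= sm (fun k => Fz d z (k + a) - Fz d z k) K <= INR a * (INR K * d + 1).
Proof.
  rewrite sm_tele. apply sm_bounds. intros i _. unfold Fz.
  replace (z + INR (i + K) * d) with ((z + INR i * d) + INR K * d) by (rewrite plus_INR; ring).
  destruct (fl_diff (z + INR i * d) (INR K * d)). lra.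
Qed.

Lemma AP_estimate t d x K : 0 <= t <= 1 -> d > 0 ->
  t * INR K - d * INR K - 1 / d <= sm (fun k => G t (x + INR k * d)) K
  <= t * INR K + d * INR K + 1 / d + 1.
Proof.
  intros Ht Hd.
  set (h := Z.to_nat (fl (t / d))).
  assert (Htd : 0 <= t / d) by (unfold Rdiv; apply Rmult_le_pos; [lra | left; apply Rinv_0_lt_compat; lra]).
  assert (Hh : INR h = IZR (fl (t / d))).
  { unfold h. rewrite INR_IZR_INZ, Z2Nat.id; auto.
    apply le_IZR. pose proof (fl_mono 0 (t/d) Htd).
    rewrite (fl_unique 0 0) in H by (simpl; lra). simpl in H. lra. }
  destruct (fl_spec (t / d)) as [Hh1 Hh2]. rewrite <- Hh in Hh1, Hh2.
  assert (Hhd1 : INR h * d <= t).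
  { apply Rmult_le_compat_r with (r := d) in Hh1; [|lra].
    unfold Rdiv in Hh1. rewrite Rmult_assoc, Rinv_l in Hh1 by lra. lra. }
  assert (Hhd2 : t < (INR h + 1) * d).
  { apply Rmult_lt_compat_r with (r := d) in Hh2; [|lra].
    unfold Rdiv in Hh2. rewrite Rmult_assoc, Rinv_l in Hh2 by lra. lra. }
  set (z := x - (INR h + 1) * d).
  assert (Hpt : forall k, Fz d z (k + S h) - Fz d z (k + 1) <= G t (x + INR k * d)
                          <= Fz d z (k + S h) - Fz d z k).
  { intros k. unfold G, Fz.
    replace (z + INR (k + S h) * d) with (x + INR k * d)
      by (unfold z; rewrite plus_INR, S_INR; ring).
    pose proof (fl_mono (z + INR k * d) (x + INR k * d - t)).
    pose proof (fl_mono (x + INR k * d - t) (z + INR (k + 1) * d)).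
    rewrite plus_INR in H0. simpl in H0. unfold z in H, H0.
    split.
    - assert (IZR (fl (x + INR k * d - t)) <= IZR (fl (x - (INR h + 1) * d + (INR k + 1) * d))) by (apply H0; nra).
      unfold z; rewrite plus_INR; simpl; lra.
    - assert (IZR (fl (x - (INR h + 1) * d + INR k * d)) <= IZR (fl (x + INR k * d - t))) by (apply H; nra).
      unfold z; lra. }
  assert (HK : 0 <= INR K) by apply pos_INR.
  assert (Hinv : INR h <= 1 / d).
  { apply Rmult_le_reg_r with d; [lra|]. unfold Rdiv. rewrite Rmult_assoc, Rinv_l by lra. lra. }
  split.
  - assert (L1 : sm (fun k => Fz d z (k + S h) - Fz d z (k + 1)) K
                <= sm (fun k => G t (x + INR k * d)) K)
      by (apply sm_le; intros; apply Hpt).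
    assert (L2 : sm (fun k => Fz d z (k + S h) - Fz d z (k + 1)) K
                = sm (fun k => Fz d (z + d) (k + h) - Fz d (z + d) k) K).
    { apply sm_ext. intros i _. unfold Fz.
      replace (z + INR (i + S h) * d) with (z + d + INR (i + h) * d)
        by (rewrite !plus_INR, S_INR; ring).
      replace (z + INR (i + 1) * d) with (z + d + INR i * d)
        by (rewrite !plus_INR; simpl; ring).
      reflexivity. }
    pose proof (tele_bound d (z + d) h K).
    assert (INR h * (INR K * d) >= (t - d) * INR K) by nra.
    lra.
  - assert (U1 : sm (fun k => G t (x + INR k * d)) K <=
                 sm (fun k => Fz d z (k + S h) - Fz d z k) K)
      by (apply sm_le; intros; apply Hpt).
    pose proof (tele_bound d z (S h) K). rewrite S_INR in H.
    assert ((INR h + 1) * (INR K * d) <= (t + d) * INR K) by nra.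
    assert (t / d <= 1 / d).
    { unfold Rdiv. apply Rmult_le_compat_r; [left; apply Rinv_0_lt_compat; lra| lra]. }
    lra.
Qed.

Lemma irr_mul sigma m p : irrational sigma -> (m >= 1)%nat -> INR m * sigma <> IZR p.
Proof.
  intros Hs Hm E. apply Hs. exists p, (Z.of_nat m). split. lia.
  rewrite <- INR_IZR_INZ, <- E. field. apply not_0_INR. lia.
Qed.

Lemma pigeon K : forall f : nat -> nat, (forall i, (i <= K)%nat -> (f i < K)%nat) ->
  exists i j, (i < j <= K)%nat /\ f i = f j.
Proof.
  induction K as [|K IH]; intros f Hf.
  - specialize (Hf 0%nat). lia.
  - destruct (classic (exists i, (i <= K)%nat /\ f i = f (S K))) as [[i [Hi E]]|Hn].
    + exists i, (S K). split; [lia|auto].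
    + set (v := f (S K)).
      destruct (IH (fun i => if Nat.ltb (f i) v then f i else (f i - 1)%nat)) as [i [j [Hij E]]].
      * intros i Hi. assert (f i <> v) by (intro; apply Hn; eauto).
        assert (f i < S K)%nat by (apply Hf; lia). assert (v < S K)%nat by (apply Hf; lia).
        destruct (Nat.ltb_spec (f i) v); lia.
      * assert (f i <> v) by (intro; apply Hn; exists i; split; [lia|auto]).
        assert (f j <> v) by (intro; apply Hn; exists j; split; [lia|auto]).
        exists i, j. split; [lia|].
        destruct (Nat.ltb_spec (f i) v), (Nat.ltb_spec (f j) v); lia.
Qed.

Lemma fl_nonneg y : 0 <= y -> (0 <= fl y)%Z.
Proof.
  intros H. destruct (fl_spec y). assert (-1 < fl y)%Z.
  { apply lt_IZR. simpl. lra. } lia.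
Qed.

Lemma dirichlet sigma delta : irrational sigma -> delta > 0 ->
  exists m p, (m >= 1)%nat /\ 0 < INR m * sigma - IZR p < delta.
Proof.
  intros Hs Hd.
  destruct (INR_unbounded (Rmax 1 (1 / delta))) as [K HK].
  assert (HK1 : INR K > 1) by (pose proof (Rmax_l 1 (1/delta)); lra).
  assert (HKd : INR K > 1 / delta) by (pose proof (Rmax_r 1 (1/delta)); lra).
  assert (HK0 : (K >= 1)%nat) by (destruct K; simpl in HK1; [lra|lia]).
  set (a := fun i : nat => frac (sigma * INR i)).
  assert (Ha : forall i, 0 <= a i < 1).
  { intros i. unfold a. rewrite frac_fl. destruct (fl_spec (sigma * INR i)). lra. }
  destruct (pigeon K (fun i => Z.to_nat (fl (INR K * a i)))) as [i [j [Hij E]]].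
  { intros i _. destruct (Ha i).
    pose proof (fl_nonneg (INR K * a i) ltac:(nra)).
    destruct (fl_spec (INR K * a i)).
    assert (fl (INR K * a i) < Z.of_nat K)%Z.
    { apply lt_IZR. rewrite <- INR_IZR_INZ. nra. }
    lia. }
  assert (E' : fl (INR K * a i) = fl (INR K * a j)).
  { pose proof (fl_nonneg (INR K * a i) ltac:(destruct (Ha i); nra)).
    pose proof (fl_nonneg (INR K * a j) ltac:(destruct (Ha j); nra)). lia. }
  assert (Hclose : Rabs (a j - a i) < 1 / INR K).
  { destruct (fl_spec (INR K * a i)), (fl_spec (INR K * a j)). rewrite E' in *.
    assert (Rabs (INR K * (a j - a i)) < 1) by (apply Rabs_def1; lra).
    rewrite Rabs_mult, Rabs_pos_eq in H3 by lra.
    apply Rmult_lt_reg_l with (INR K); [lra|]. field_simplify; lra. }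
  set (M := (j - i)%nat). set (P := (fl (sigma * INR j) - fl (sigma * INR i))%Z).
  assert (Ee : a j - a i = INR M * sigma - IZR P).
  { unfold a, M, P. rewrite !frac_fl, minus_INR, minus_IZR by lia. ring. }
  assert (HM : (M >= 1)%nat) by (unfold M; lia).
  assert (Hne : INR M * sigma - IZR P <> 0) by (pose proof (irr_mul sigma M P Hs HM); lra).
  assert (H1K : 1 / INR K < delta).
  { apply Rmult_lt_reg_l with (INR K); [lra|].
    apply Rmult_lt_reg_l with (/ delta); [apply Rinv_0_lt_compat; lra|].
    field_simplify; try lra. }
  assert (H1K1 : 1 / INR K < 1).
  { apply Rmult_lt_reg_l with (INR K); [lra|]. field_simplify; lra. }
  rewrite Ee in Hclose.
  destruct (Rlt_dec 0 (INR M * sigma - IZR P)) as [Hp|Hp].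
  - exists M, P. split; auto. split; auto. rewrite Rabs_pos_eq in Hclose; lra.
  - set (c := IZR P - INR M * sigma).
    assert (Hc : 0 < c < 1 / INR K).
    { rewrite Rabs_left in Hclose by lra. unfold c. lra. }
    set (n := Z.to_nat (fl (1 / c))).
    assert (Hcinv : 1 / c > 1).
    { apply Rmult_lt_reg_l with c; [lra|]. field_simplify; lra. }
    pose proof (fl_nonneg (1 / c) ltac:(lra)) as Hfl0.
    assert (Hn : INR n = IZR (fl (1 / c))) by (unfold n; rewrite INR_IZR_INZ, Z2Nat.id; auto).
    destruct (fl_spec (1 / c)) as [Hn1 Hn2]. rewrite <- Hn in Hn1, Hn2.
    assert (Hnc1 : INR n * c <= 1).
    { apply Rmult_le_compat_r with (r := c) in Hn1; [|lra]. field_simplify in Hn1; lra. }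
    assert (Hnc2 : 1 < (INR n + 1) * c).
    { apply Rmult_lt_compat_r with (r := c) in Hn2; [|lra]. field_simplify in Hn2; lra. }
    assert (Hn0 : (n >= 1)%nat).
    { destruct n; [simpl in Hnc2; lra | lia]. }
    exists (n * M)%nat, (Z.of_nat n * P - 1)%Z. split; [nia|].
    assert (Eq : INR (n * M) * sigma - IZR (Z.of_nat n * P - 1) = 1 - INR n * c).
    { unfold c. rewrite mult_INR, minus_IZR, mult_IZR, <- INR_IZR_INZ. simpl. ring. }
    rewrite Eq. split.
    + destruct (Rle_lt_or_eq_dec _ _ Hnc1) as [Hlt|Heq]; [lra|].
      exfalso. apply (irr_mul sigma (n * M) (Z.of_nat n * P - 1) Hs ltac:(nia)).
      apply Rminus_diag_uniq. rewrite Eq. lra.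
    + lra.
Qed.

Lemma frac_shift y z : frac (y + IZR z) = frac y.
Proof. rewrite !frac_fl, fl_shift, plus_IZR. ring. Qed.

Lemma count_sm sigma rho t j n : 0 <= t <= 1 ->
  INR (count_below (fun n => frac (sigma * INR n + rho)) t j n)
  = sm (fun i => G t (sigma * INR (j + i) + rho)) n.
Proof.
  intros Ht. induction n; simpl; auto.
  rewrite plus_INR, IHn, <- G_ind by auto. f_equal.
  destruct Rlt_dec; reflexivity.
Qed.

Lemma equi sigma rho t eps : irrational sigma -> 0 <= t <= 1 -> eps > 0 ->
  exists N : nat, forall n j : nat, (n >= N)%nat -> (n > 0)%nat ->
    Rabs (INR (count_below (fun n => frac (sigma * INR n + rho)) t j n) / INR n - t) < eps.
Proof.
  intros Hs Ht He.
  destruct (dirichlet sigma (eps / 2) Hs ltac:(lra)) as [m [p [Hm Hd]]].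
  set (d := INR m * sigma - IZR p) in Hd.
  set (C := INR m * (1 / d + 2)).
  destruct (INR_unbounded (2 * C / eps)) as [N HN].
  exists N. intros n j Hn Hn0.
  rewrite count_sm by auto.
  set (g := fun i => G t (sigma * INR (j + i) + rho)).
  assert (Hmn : m <> 0%nat) by lia.
  pose proof (Nat.div_mod n m Hmn) as Hdm.
  pose proof (Nat.mod_upper_bound n m Hmn) as Hr.
  set (q := (n / m)%nat) in *. set (r := (n mod m)%nat) in *.
  assert (Hsplit : sm g n = sm g (m * q) + sm (fun i => g (m * q + i)%nat) r).
  { rewrite <- sm_split. rewrite <- Hdm. reflexivity. }
  rewrite sm_decomp in Hsplit.
  assert (Hd0 : d > 0) by lra.
  assert (Hin : forall r', (r' < m)%nat ->
     t * INR q - d * INR q - 1 / d <= sm (fun k => g (r' + m * k)%nat) q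
     <= t * INR q + d * INR q + 1 / d + 1).
  { intros r' _.
    set (x := sigma * INR (j + r') + rho).
    replace (sm (fun k => g (r' + m * k)%nat) q) with (sm (fun k => G t (x + INR k * d)) q).
    - apply AP_estimate; auto.
    - apply sm_ext. intros k _. unfold g, x.
      rewrite <- (G_shift t _ (Z.of_nat k * p)). f_equal.
      unfold d. rewrite mult_IZR, <- INR_IZR_INZ, !plus_INR, mult_INR. ring. }
  pose proof (sm_bounds _ m _ _ Hin) as Hout.
  assert (Hrem : INR r * 0 <= sm (fun i => g (m * q + i)%nat) r <= INR r * 1).
  { apply sm_bounds. intros i _. apply G_bounds; auto. }
  assert (HnE : INR n = INR m * INR q + INR r).
  { rewrite Hdm at 1. rewrite plus_INR, mult_INR. reflexivity. }
  assert (Hrm : INR r <= INR m) by (apply le_INR; lia).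
  assert (Hq0 : 0 <= INR q) by apply pos_INR.
  assert (Hr0 : 0 <= INR r) by apply pos_INR.
  assert (Hm0 : 1 <= INR m) by (apply (le_INR 1); lia).
  assert (HnR : INR n > 0) by (apply lt_0_INR; lia).
  assert (HNn : INR N <= INR n) by (apply le_INR; lia).
  assert (HC : C < eps / 2 * INR n).
  { assert (2 * C / eps < INR n) by lra.
    apply Rmult_lt_compat_r with (r := eps) in H; [|lra].
    field_simplify in H; lra. }
  assert (Hdq : d * (INR m * INR q) <= d * INR n) by (apply Rmult_le_compat_l; lra).
  assert (Htr : t * INR r <= INR m) by nra.
  assert (Htr0 : 0 <= t * INR r) by nra.
  assert (Hinvd : 0 < 1 / d) by (unfold Rdiv; rewrite Rmult_1_l; apply Rinv_0_lt_compat; lra).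
  assert (Hdn : d * INR n < eps / 2 * INR n) by (apply Rmult_lt_compat_r; lra).
  assert (Hbound : Rabs (sm g n - t * INR n) < eps * INR n).
  { apply Rabs_def1.
    - rewrite Hsplit, HnE. unfold C in HC. nra.
    - rewrite Hsplit, HnE. unfold C in HC. nra. }
  replace (sm g n / INR n - t) with ((sm g n - t * INR n) / INR n) by (field; lra).
  unfold Rdiv. rewrite Rabs_mult, Rabs_inv, (Rabs_pos_eq (INR n)) by lra.
  apply Rmult_lt_reg_r with (INR n); [lra|].
  rewrite Rmult_assoc, Rinv_l by lra. lra.
Qed.

Lemma prefix_two (f : nat -> list R) : (forall i, length (f i) = 2%nat) ->
  forall i, prefix_len f i = (2 * i)%nat.
Proof. intros H i. induction i; simpl; auto. rewrite IHi, H. lia. Qed.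

Theorem mainTheorem7 (sigma rho : R) (Hsigma : irrational sigma) :
  let b := fun n : nat => frac (sigma * INR n + rho) in
  canonical b /\
  fixed_point_of_morphism
    (fun x => frac (2 * x - rho) :: frac (2 * x - rho + sigma) :: nil) b.
Proof.
  intros b. split; [split; [|split]|split].
  - intros i j Hij E. unfold b in E. rewrite !frac_fl in E.
    destruct (Nat.lt_gt_cases i j) as [[Hl|Hl] _]; [lia| |].
    + apply (irr_mul sigma (j - i) (fl (sigma * INR j + rho) - fl (sigma * INR i + rho)) Hsigma ltac:(lia)).
      rewrite minus_INR, minus_IZR by lia. lra.
    + apply (irr_mul sigma (i - j) (fl (sigma * INR i + rho) - fl (sigma * INR j + rho)) Hsigma ltac:(lia)).
      rewrite minus_INR, minus_IZR by lia. lra.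
  - intros i. unfold b. rewrite frac_fl. destruct (fl_spec (sigma * INR i + rho)). lra.
  - intros t Ht eps He. apply equi; auto.
  - intros x H. discriminate.
  - intros i k Hk. rewrite prefix_two by reflexivity. simpl in Hk.
    unfold b. destruct k as [|[|k]]; [| |lia]; simpl nth.
    + replace (2 * frac (sigma * INR i + rho) - rho)
        with (sigma * INR (2 * i + 0) + rho + IZR (-2 * fl (sigma * INR i + rho))).
      * rewrite frac_shift. reflexivity.
      * rewrite frac_fl, mult_IZR, plus_INR, mult_INR. simpl. ring.
    + replace (2 * frac (sigma * INR i + rho) - rho + sigma)
        with (sigma * INR (2 * i + 1) + rho + IZR (-2 * fl (sigma * INR i + rho))).
      * rewrite frac_shift. reflexivity.
      * rewrite frac_fl, mult_IZR, plus_INR, mult_INR. simpl. ring.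
Qed.
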